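(* Let $\xi>0$ and $\alpha\in\mathbb{R}$, and consider the planar vector field $f_0(y,z;\alpha)$ on $\mathbb{R}^2$ given by \[ \dot y = e^{z}-1,\qquad \dot z = \xi + e^{z}\left(\alpha z - \xi y - \xi\right). \] Then $f_0$ has a unique fixed point, namely $(y,z)=(0,0)$, and this fixed point undergoes a degenerate Hopf bifurcation at $\alpha=\xi$. In particular, for $\alpha=\xi$ the vector field is Hamiltonian (up to a positive factor) and can be written as \[ f_0(y,z;\xi)=g(y,z)\,J\,\nabla H(y,z), \] where \[ g(y,z)=\frac{e^{\xi y+z}}{\xi},\qquad H(y,z)=-e^{-\xi y}\left(\xi y-\xi z+\xi+1-\xi e^{-z}\right)+1,\qquad J=\begin{bmatrix}0&1\\-1&0\end{bmatrix}. \]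
   Context: This planar system is the reduced (slow) problem, restricted to the critical manifold $C_0=\{z=-x-\xi y\}$, of the dimensionless spring-block earthquake model $\dot x=-e^{z}(x+(1+\alpha)z)$, $\dot y=e^{z}-1$, $\varepsilon\dot z=-e^{-z}(y+(x+z)/\xi)$ with $\varepsilon=0$. *)

(* Defs.v *)
From Stdlib Require Import Reals Lra.
From Coquelicot Require Import Coquelicot.
Open Scope R_scope.

Definition f0y (xi alpha y z : R) : R := exp z - 1.
Definition f0z (xi alpha y z : R) : R :=
  xi + exp z * (alpha * z - xi * y - xi).

Definition is_fixed_point (xi alpha y z : R) : Prop :=
  f0y xi alpha y z = 0 /\ f0z xi alpha y z = 0.

Definition jac11 xi alpha y0 z0 := Derive (fun y => f0y xi alpha y z0) y0.
Definition jac12 xi alpha y0 z0 := Derive (fun z => f0y xi alpha y0 z) z0.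
Definition jac21 xi alpha y0 z0 := Derive (fun y => f0z xi alpha y z0) y0.
Definition jac22 xi alpha y0 z0 := Derive (fun z => f0z xi alpha y0 z) z0.

Definition jac_trace xi alpha y0 z0 :=
  jac11 xi alpha y0 z0 + jac22 xi alpha y0 z0.
Definition jac_det xi alpha y0 z0 :=
  jac11 xi alpha y0 z0 * jac22 xi alpha y0 z0
  - jac12 xi alpha y0 z0 * jac21 xi alpha y0 z0.

(* Hopf bifurcation of the fixed point (y0,z0) (a fixed point for all alpha)
   at alpha = a0: at a0 the Jacobian has a pair of purely imaginary
   eigenvalues +/- i w, w > 0 (for a real 2x2 matrix: trace 0, det > 0), and
   the real part of the eigenvalue pair, trace/2, crosses zero with nonzero
   speed (transversality). *)
Definition hopf_point (xi a0 y0 z0 : R) : Prop :=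
  (forall alpha, is_fixed_point xi alpha y0 z0) /\
  jac_trace xi a0 y0 z0 = 0 /\
  jac_det xi a0 y0 z0 > 0 /\
  exists d, is_derive (fun alpha => jac_trace xi alpha y0 z0 / 2) a0 d /\ d <> 0.

Definition gfac (xi y z : R) : R := exp (xi * y + z) / xi.
Definition Ham (xi y z : R) : R :=
  - exp (- xi * y) * (xi * y - xi * z + xi + 1 - xi * exp (- z)) + 1.

(* f_0(.,.;alpha) = g J grad H with J = [[0,1],[-1,0]], i.e.
   (f0y, f0z) = g * (dH/dz, - dH/dy), with g > 0. *)
Definition hamiltonian_form (xi alpha : R) (g H : R -> R -> R) : Prop :=
  forall y z, g y z > 0 /\
    exists Hy Hz,
      is_derive (fun t => H t z) y Hy /\
      is_derive (fun t => H y t) z Hz /\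
      f0y xi alpha y z = g y z * Hz /\
      f0z xi alpha y z = g y z * (- Hy).

(* Main.v *)
Require Import Defs.
From Stdlib Require Import Reals Lra.
From Coquelicot Require Import Coquelicot.
Open Scope R_scope.

Lemma j11 xi alpha : jac11 xi alpha 0 0 = 0.
Proof. unfold jac11, f0y. apply is_derive_unique. auto_derive; auto; lra. Qed.
Lemma j12 xi alpha : jac12 xi alpha 0 0 = 1.
Proof. unfold jac12, f0y. apply is_derive_unique. auto_derive; auto. rewrite exp_0; lra. Qed.
Lemma j21 xi alpha : jac21 xi alpha 0 0 = - xi.
Proof. unfold jac21, f0z. apply is_derive_unique. auto_derive; auto. rewrite exp_0; ring. Qed.
Lemma j22 xi alpha : jac22 xi alpha 0 0 = alpha - xi.
Proof. unfold jac22, f0z. apply is_derive_unique. auto_derive; auto. rewrite exp_0; ring. Qed.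

Theorem proposition1 (xi : R) (hxi : 0 < xi) :
  (forall alpha y z, is_fixed_point xi alpha y z <-> (y = 0 /\ z = 0)) /\
  hopf_point xi xi 0 0 /\
  hamiltonian_form xi xi (gfac xi) (Ham xi).
Proof.
  split; [|split].
  - intros alpha y z; unfold is_fixed_point, f0y, f0z; split.
    + intros [H1 H2].
      assert (Hz : z = 0).
      { apply exp_inv; rewrite exp_0; lra. }
      subst z. rewrite exp_0 in H2.
      assert (xi * y = 0) by lra.
      split; auto. apply Rmult_integral in H; destruct H; [lra|auto].
    + intros [-> ->]; rewrite exp_0; split; ring.
  - split; [|split; [|split]].
    + intros alpha; unfold is_fixed_point, f0y, f0z; rewrite exp_0; split; ring.
    + unfold jac_trace; rewrite j11, j22; ring.
    + unfold jac_det; rewrite j11, j22, j12, j21; lra.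
    + exists (1/2); split; [|lra].
      apply (is_derive_ext (fun alpha => (alpha - xi) / 2)).
      * intros t; unfold jac_trace; rewrite j11, j22; f_equal; ring.
      * auto_derive; auto; field.
  - intros y z; split.
    + unfold gfac; apply Rdiv_lt_0_compat; [apply exp_pos|lra].
    + exists (xi * exp (- xi * y) * (xi * y - xi * z + xi - xi * exp (- z))).
      exists (xi * exp (- xi * y) * (1 - exp (- z))).
      split; [|split; [|split]].
      * unfold Ham; auto_derive; auto; ring.
      * unfold Ham; auto_derive; auto; ring.
      * unfold f0y, gfac.
        replace (exp (xi * y + z)) with (exp (xi*y) * exp z) by (rewrite exp_plus; auto).
        replace (exp (- xi * y)) with (/ exp (xi * y)) by (rewrite <- exp_Ropp; f_equal; ring).
        replace (exp (- z)) with (/ exp z) by (rewrite exp_Ropp; auto).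
        field; repeat split; try lra; apply Rgt_not_eq, exp_pos.
      * unfold f0z, gfac.
        replace (exp (xi * y + z)) with (exp (xi*y) * exp z) by (rewrite exp_plus; auto).
        replace (exp (- xi * y)) with (/ exp (xi * y)) by (rewrite <- exp_Ropp; f_equal; ring).
        replace (exp (- z)) with (/ exp z) by (rewrite exp_Ropp; auto).
        field; repeat split; try lra; apply Rgt_not_eq, exp_pos.
Qed.
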